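(* Let $A\in\mathbb{C}^{n\times n}_r$ be represented by its Hartwig-Spindelb\''{o}ck decomposition $A=U\left(\begin{array}{cc}\Sigma K & \Sigma L\\ 0 & 0\end{array}\right)U^*$ (with $U$ unitary, $\Sigma={\rm diag}(\sigma_1,\dots,\sigma_r)$ the positive singular values, $KK^*+LL^*=I_r$), and assume ${\rm rank}(A^{\sim}AA^{\sim})={\rm rank}(A)$. Write $\left(\begin{array}{cc}G_1 & G_2\\ G_3 & G_4\end{array}\right)=U^*GU$ with $G_1\in\mathbb{C}^{r\times r}$, and $\Delta=\left(\begin{array}{cc}K & L\end{array}\right)U^*GU\left(\begin{array}{c}K^*\\ L^*\end{array}\right)$. Let $B,C,X\in\mathbb{C}^{n\times n}$. Then $X=A^{\mathfrak{m}}$ is the unique solution of the rank equation ${\rm rank}\left(\begin{array}{cc}A & B\\ C & X\end{array}\right)={\rm rank}(A)$ if and only if \[ B=U\left(\begin{array}{cc}B_1 & B_2\\ 0 & 0\end{array}\right)U^*G \quad\text{and}\quad C=GUTU^*, \] where \begin{align*} T&=\left(\begin{array}{cc}J_1\Sigma K & J_1\Sigma L\\ J_3\Sigma K & J_3\Sigma L\end{array}\right),\\ B_1&=\left(\begin{array}{cc}\Sigma K & \Sigma L\end{array}\right)\left[T^{(1)}\left(\begin{array}{c}K^*(G_1\Sigma\Delta)^{-1}\\ L^*(G_1\Sigma\Delta)^{-1}\end{array}\right)+(I_n-T^{(1)}T)Y_1\right],\\ B_2&=\left(\begin{array}{cc}\Sigma K & \Sigma L\end{array}\right)(I_n-T^{(1)}T)Y_2,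 \end{align*} with $J_1\in\mathbb{C}^{r\times r}$ and $J_3\in\mathbb{C}^{(n-r)\times r}$ satisfying $\mathcal{N}(T^* )\subseteq\mathcal{N}\left(\left(\begin{array}{cc}K & L\end{array}\right)\right)$, $Y_1\in\mathbb{C}^{n\times r}$ and $Y_2\in\mathbb{C}^{n\times(n-r)}$ arbitrary, and $T^{(1)}$ any matrix with $TT^{(1)}T=T$.
   Context: $G=\left(\begin{array}{cc}1&0\\0&-I_{n-1}\end{array}\right)$ is the Minkowski metric matrix; the Minkowski adjoint is $A^{\sim}=GA^*G$ for square $A$ (in general $A^{\sim}=GA^*F$). The Minkowski inverse $A^{\mathfrak{m}}$ is the unique $X$ with $AXA=A$, $XAX=X$, $(AX)^{\sim}=AX$, $(XA)^{\sim}=XA$; under the rank hypothesis it exists, and $G_1$ and $\Delta$ are nonsingular. *)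

(* Defs.v *)
From HB Require Import structures.
From mathcomp Require Import all_boot all_order all_algebra all_field.
Set Implicit Arguments. Unset Strict Implicit. Unset Printing Implicit Defensive.
Import Order.TTheory GRing.Theory Num.Theory.
Local Open Scope ring_scope.

Definition cadj (m n : nat) (A : 'M[algC]_(m, n)) : 'M[algC]_(n, m) :=
  (map_mx (fun z : algC => z^*) A)^T.

Definition mink_G (n : nat) : 'M[algC]_n :=
  \matrix_(i, j) (if i == j then (if val i == 0%N then 1 else -1) else 0).

Definition mink_adj (n : nat) (A : 'M[algC]_n) : 'M[algC]_n :=
  mink_G n *m cadj A *m mink_G n.

Definition is_minkowski_inverse (n : nat) (A X : 'M[algC]_n) : Prop :=
  [/\ A *m X *m A = A, X *m A *m X = X,
      mink_adj (A *m X) = A *m X & mink_adj (X *m A) = X *m A].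

(* Main.v *)
Require Import Defs.
From HB Require Import structures.
From mathcomp Require Import all_boot all_order all_algebra all_field.
Import Order.TTheory GRing.Theory Num.Theory.
Local Open Scope ring_scope.

Lemma cadjM m n p (A : 'M[algC]_(m,n)) (B : 'M[algC]_(n,p)) : cadj (A *m B) = cadj B *m cadj A.
Proof. by rewrite /cadj map_mxM trmx_mul. Qed.
Lemma cadjK m n (A : 'M[algC]_(m,n)) : cadj (cadj A) = A.
Proof. by apply/matrixP=> i j; rewrite /cadj !mxE conjCK. Qed.
Lemma cadjD m n (A B : 'M[algC]_(m,n)) : cadj (A + B) = cadj A + cadj B.
Proof. by apply/matrixP=> i j; rewrite /cadj !mxE rmorphD. Qed.
Lemma cadjN m n (A : 'M[algC]_(m,n)) : cadj (- A) = - cadj A.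
Proof. by apply/matrixP=> i j; rewrite /cadj !mxE rmorphN. Qed.
Lemma cadj0 m n : cadj (0 : 'M[algC]_(m,n)) = 0.
Proof. by apply/matrixP=> i j; rewrite /cadj !mxE rmorph0. Qed.
Lemma cadj1 n : cadj (1%:M : 'M[algC]_n) = 1%:M.
Proof. by rewrite /cadj map_mx1 trmx1. Qed.
Lemma cadj_row m n1 n2 (A : 'M[algC]_(m,n1)) (B : 'M[algC]_(m,n2)) :
  cadj (row_mx A B) = col_mx (cadj A) (cadj B).
Proof. by rewrite /cadj map_row_mx tr_row_mx. Qed.
Lemma cadj_col m1 m2 n (A : 'M[algC]_(m1,n)) (B : 'M[algC]_(m2,n)) :
  cadj (col_mx A B) = row_mx (cadj A) (cadj B).
Proof. by rewrite /cadj map_col_mx tr_col_mx. Qed.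
Lemma cadj_inv n (A : 'M[algC]_n) : cadj (invmx A) = invmx (cadj A).
Proof. by rewrite /cadj (map_invmx Num.conj_op) trmx_inv. Qed.
Lemma cadj_unit n (A : 'M[algC]_n) : (cadj A \in unitmx) = (A \in unitmx).
Proof. by rewrite /cadj unitmx_tr map_unitmx. Qed.

Definition gd n : 'rV[algC]_n := \row_(i < n) (if val i == 0%N then 1 else -1).
Lemma mink_G_diag n : mink_G n = diag_mx (gd n).
Proof. by apply/matrixP=> i j; rewrite !mxE; case: eqP=> [->|]; rewrite ?mulr1n ?mulr0n. Qed.
Lemma GG n : mink_G n *m mink_G n = 1%:M.
Proof.
rewrite mink_G_diag mul_diag_mx; apply/matrixP=> i j; rewrite !mxE.
case: (i == j); rewrite ?mulr1n ?mulr0n ?mulr0 //; case: ifP=> _; rewrite ?mulr1 //.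
by rewrite mulrN1 opprK.
Qed.
Lemma cadjG n : cadj (mink_G n) = mink_G n.
Proof.
apply/matrixP=> i j; rewrite /cadj !mxE eq_sym.
case: eqP=> [->|_]; last by rewrite conjC0.
by case: ifP; rewrite ?conjC1 ?rmorphN1.
Qed.

Lemma madjM n (P Q : 'M[algC]_n) : mink_adj (P *m Q) = mink_adj Q *m mink_adj P.
Proof.
by rewrite /mink_adj cadjM !mulmxA -(mulmxA _ (mink_G n) (mink_G n)) GG mulmx1.
Qed.
Lemma madjK n (P : 'M[algC]_n) : mink_adj (mink_adj P) = P.
Proof.
by rewrite /mink_adj !cadjM cadjK cadjG !mulmxA GG mul1mx -mulmxA GG mulmx1.
Qed.

Lemma mink_uniq n (A X Y : 'M[algC]_n) :
  is_minkowski_inverse A X -> is_minkowski_inverse A Y -> X = Y.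
Proof.
case=> h1 h2 h3 h4 [k1 k2 k3 k4].
have eA1 : mink_adj A = mink_adj A *m mink_adj (A *m Y).
  by rewrite -madjM k1.
have eA2 : mink_adj A = mink_adj (X *m A) *m mink_adj A.
  by rewrite -madjM mulmxA h1.
have eX : X = X *m A *m Y.
  have e2 : mink_adj (A *m X) = mink_adj (A *m X) *m mink_adj (A *m Y).
    by rewrite madjM -mulmxA -eA1.
  by rewrite -{1}h2 -mulmxA -h3 e2 h3 k3 !mulmxA h2.
have eY : Y = X *m A *m Y.
  have e2 : mink_adj (Y *m A) = mink_adj (X *m A) *m mink_adj (Y *m A).
    by rewrite madjM mulmxA -eA2.
  by rewrite -{1}k2 -k4 e2 h4 k4 -(mulmxA (X *m A)) k2.
by rewrite {1}eX -eY.
Qed.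

Lemma rank_unitl m n (P : 'M[algC]_m) (A : 'M[algC]_(m,n)) : P \in unitmx -> \rank (P *m A) = \rank A.
Proof.
move=> hP; apply/eqP; rewrite eqn_leq mxrankM_maxr /=.
by rewrite -{1}(mul1mx A) -(mulVmx hP) -mulmxA mxrankM_maxr.
Qed.
Lemma rank_unitr m n (P : 'M[algC]_n) (A : 'M[algC]_(m,n)) : P \in unitmx -> \rank (A *m P) = \rank A.
Proof.
move=> hP; apply/eqP; rewrite eqn_leq mxrankM_maxl /=.
by rewrite -{1}(mulmx1 A) -(mulmxV hP) mulmxA mxrankM_maxl.
Qed.

Lemma rank_block_C m1 m2 n1 n2 (A : 'M[algC]_(m1,n1)) (B : 'M[algC]_(m1,n2))
  (C : 'M[algC]_(m2,n1)) (X : 'M[algC]_(m2,n2)) :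
  \rank (block_mx A B C X) = \rank A -> exists Z, C = Z *m A.
Proof.
move=> h.
have h1 : (\rank (col_mx A C) <= \rank A)%N.
  rewrite -h -[col_mx A C](_ : block_mx A B C X *m col_mx 1%:M 0 = _).
    exact: mxrankM_maxl.
  by rewrite mul_block_col !mulmx1 !mulmx0 !addr0.
have sA : (A <= col_mx A C)%MS.
  by rewrite -[X in (X <= _)%MS](_ : row_mx 1%:M 0 *m col_mx A C = A) ?submxMl // mul_row_col mul1mx mul0mx addr0.
have [le eq] := mxrank_leqif_sup sA.
have : (col_mx A C <= A)%MS by rewrite -eq eqn_leq le h1.
rewrite col_mx_sub => /andP [_ /submxP [Z ->]].
by exists Z.
Qed.

Lemma rank_block_B m1 m2 n1 n2 (A : 'M[algC]_(m1,n1)) (B : 'M[algC]_(m1,n2))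
  (C : 'M[algC]_(m2,n1)) (X : 'M[algC]_(m2,n2)) :
  \rank (block_mx A B C X) = \rank A -> exists Y, B = A *m Y.
Proof.
move=> h.
have [Z hZ] : exists Z, B^T = Z *m A^T.
  by apply: (@rank_block_C _ _ _ _ A^T C^T B^T X^T); rewrite -tr_block_mx !mxrank_tr.
by exists Z^T; rewrite -[B]trmxK hZ trmx_mul trmxK.
Qed.

Lemma rank_block_eq m1 m2 n1 n2 (A : 'M[algC]_(m1,n1)) (Y : 'M[algC]_(n1,n2))
  (Z : 'M[algC]_(m2,m1)) (X : 'M[algC]_(m2,n2)) :
  \rank (block_mx A (A *m Y) (Z *m A) X) = \rank A <-> X = Z *m A *m Y.
Proof.
have e : block_mx A (A *m Y) (Z *m A) X =
   block_mx 1%:M 0 Z 1%:M *m block_mx A 0 0 (X - Z *m A *m Y) *m block_mx 1%:M Y 0 1%:M.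
  rewrite !mulmx_block !mulmx0 !mul0mx !mulmx1 !mul1mx !addr0 !add0r.
  by rewrite addrC subrK.
have u1 : block_mx 1%:M 0 Z 1%:M \in unitmx (R:=algC).
  by rewrite unitmxE det_lblock !det1 mulr1 unitr1.
have u2 : block_mx 1%:M Y 0 1%:M \in unitmx (R:=algC).
  by rewrite unitmxE det_ublock !det1 mulr1 unitr1.
rewrite e rank_unitr // rank_unitl // rank_diag_block_mx.
split=> [h|->]; last by rewrite subrr mxrank0 addn0.
by apply/eqP; rewrite -subr_eq0 -mxrank_eq0; apply/eqP; move: h; rewrite -{2}(addn0 (\rank A)) => /eqP; rewrite eqn_add2l => /eqP.
Qed.

Lemma ker_sub m p n (P : 'M[algC]_(m,n)) (Q : 'M[algC]_(p,n)) :
  (forall x : 'cV[algC]_n, P *m x = 0 -> Q *m x = 0) -> exists F, Q = F *m P.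
Proof.
move=> h; apply/submxP; rewrite submxE; apply/eqP/matrixP=> i j.
have := h (cokermx P *m delta_mx j 0).
rewrite [P *m _]mulmxA (mulmx_coker P) mul0mx => /(_ erefl).
rewrite mulmxA -colE => /matrixP /(_ i 0).
by rewrite !mxE.
Qed.

Lemma c2 m n p q (X : 'M[algC]_(m,n)) (P : 'M[algC]_(n,p)) (Q : 'M[algC]_(p,q)) D :
  P *m Q = D -> X *m P *m Q = X *m D.
Proof. by move=> <-; rewrite mulmxA. Qed.
Lemma c3 m n p q k (X : 'M[algC]_(m,n)) (P : 'M[algC]_(n,p)) (Q : 'M[algC]_(p,q)) (S : 'M[algC]_(q,k)) D :
  P *m Q *m S = D -> X *m P *m Q *m S = X *m D.
Proof. by move=> <-; rewrite !mulmxA. Qed.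
Lemma c4 m n p q k l (X : 'M[algC]_(m,n)) (P : 'M[algC]_(n,p)) (Q : 'M[algC]_(p,q)) (S : 'M[algC]_(q,k)) (V : 'M[algC]_(k,l)) D :
  P *m Q *m S *m V = D -> X *m P *m Q *m S *m V = X *m D.
Proof. by move=> <-; rewrite !mulmxA. Qed.

Arguments c2 {m n p q X P Q D} _.
Arguments c3 {m n p q k X P Q S D} _.
Arguments c4 {m n p q k l X P Q S V D} _.

Lemma coords n r (E : 'M[algC]_(n, r)) (S : 'M[algC]_r) (R : 'M[algC]_(r, n)) (H : 'M[algC]_n)
  (G1 D W : 'M[algC]_r) :
  H *m H = 1%:M -> cadj H = H ->
  G1 = cadj E *m H *m E -> D = R *m H *m cadj R ->
  W *m (G1 *m S *m D) = 1%:M -> (G1 *m S *m D) *m W = 1%:M ->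
  let P := E *m S *m R in let X := H *m cadj R *m W *m cadj E *m H in
  [/\ P *m X *m P = P, X *m P *m X = X, H *m cadj (P *m X) *m H = P *m X
    & H *m cadj (X *m P) *m H = X *m P].
Proof.
move=> hHH cH hG1 hD hWl hWr P X.
have cG1 : cadj G1 = G1 by rewrite hG1 !cadjM cadjK cH mulmxA.
have cD : cadj D = D by rewrite hD !cadjM cadjK cH mulmxA.
have [hu _] := mulmx1_unit hWr.
have G1u : G1 \in unitmx by move: hu; rewrite !unitmx_mul => /andP [/andP [] ].
have Du : D \in unitmx by move: hu; rewrite !unitmx_mul => /andP [_ ].
have e1 : S *m D *m W = invmx G1.
  by rewrite -[LHS](mulKmx G1u) (mulmxA G1) (mulmxA G1) hWr mulmx1.
have e2 : W *m G1 *m S = invmx D.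
  have h : W *m G1 *m S *m D = 1%:M by rewrite !mulmxA in hWl.
  by rewrite -[LHS](mulKmx Du) (mulmx1C h) mulmx1.
have e3 : S *m D *m W *m G1 = 1%:M.
  by rewrite e1 mulVmx.
have e4 : W *m G1 *m S *m D = 1%:M by rewrite e2 mulVmx.
have hPX : P *m X = E *m invmx G1 *m cadj E *m H.
  by rewrite /P /X !mulmxA (c3 (esym hD)) (c3 e1).
have hXP : X *m P = H *m cadj R *m invmx D *m R.
  by rewrite /P /X !mulmxA (c3 (esym hG1)) (c3 e2).
split.
- by rewrite hPX /P !mulmxA (c3 (esym hG1)) (c2 (mulVmx G1u)) mulmx1.
- by rewrite hXP /X !mulmxA (c3 (esym hD)) (c2 (mulVmx Du)) mulmx1.
- by rewrite hPX !cadjM cadjK cH cadj_inv cG1 !mulmxA hHH mul1mx.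
- by rewrite hXP !cadjM cadjK cH cadj_inv cD !mulmxA (c2 hHH) mulmx1.
Qed.

Lemma transport n (U P X : 'M[algC]_n) :
  U *m cadj U = 1%:M ->
  let H := cadj U *m mink_G n *m U in
  [/\ P *m X *m P = P, X *m P *m X = X, H *m cadj (P *m X) *m H = P *m X
    & H *m cadj (X *m P) *m H = X *m P] ->
  is_minkowski_inverse (U *m P *m cadj U) (U *m X *m cadj U).
Proof.
move=> hU H [e1 e2 e3 e4].
have hUi := mulmx1C hU.
have hm : forall Q, mink_adj (U *m Q *m cadj U) = U *m (H *m cadj Q *m H) *m cadj U.
  move=> Q; rewrite /mink_adj /H !cadjM cadjK !mulmxA (c2 hU) mulmx1.
  by rewrite hU mul1mx.
have hp : forall Q1 Q2, U *m Q1 *m cadj U *m (U *m Q2 *m cadj U) = U *m (Q1 *m Q2) *m cadj U.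
  by move=> Q1 Q2; rewrite !mulmxA (c2 hUi) mulmx1.
split; rewrite ?hp ?e1 ?e2 //; by rewrite hm ?e3 ?e4.
Qed.

Arguments transport {n U P X}.
Arguments coords {n r E S R H G1 D W}.
Arguments mink_uniq {n A X Y}.

Arguments rank_block_B {m1 m2 n1 n2 A B C X}.
Arguments rank_block_C {m1 m2 n1 n2 A B C X}.
Arguments ker_sub {m p n P Q}.

Lemma Tgen r s (J1 : 'M[algC]_r) (J3 : 'M[algC]_(s, r)) (Sg K : 'M[algC]_r) (L : 'M[algC]_(r, s)) :
  block_mx (J1 *m Sg *m K) (J1 *m Sg *m L) (J3 *m Sg *m K) (J3 *m Sg *m L)
  = col_mx J1 J3 *m Sg *m row_mx K L.
Proof. by rewrite -[RHS]mulmxA mul_mx_row mul_col_row !mulmxA. Qed.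

Theorem theorem7p3 (r s : nat)
  (A : 'M[algC]_(r + s)) (U : 'M[algC]_(r + s)) (sigma : 'rV[algC]_r)
  (K : 'M[algC]_r) (L : 'M[algC]_(r, s))
  (hrank : \rank A = r)
  (hU : U *m cadj U = 1%:M)
  (hsigma : forall i, 0 < sigma 0 i)
  (hKL : K *m cadj K + L *m cadj L = 1%:M)
  (hA : A = U *m block_mx (diag_mx sigma *m K) (diag_mx sigma *m L) 0 0 *m cadj U)
  (hrk : \rank (mink_adj A *m A *m mink_adj A) = \rank A)
  (Am : 'M[algC]_(r + s)) (hAm : is_minkowski_inverse A Am)
  (B C : 'M[algC]_(r + s)) :
  let Sg := diag_mx sigma in
  let G := mink_G (r + s) in
  let G1 := ulsubmx (cadj U *m G *m U) in
  let Delta := row_mx K L *m (cadj U *m G *m U) *m col_mx (cadj K) (cadj L) in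
  (forall X : 'M[algC]_(r + s), \rank (block_mx A B C X) = \rank A <-> X = Am)
  <->
  exists (J1 : 'M[algC]_r) (J3 : 'M[algC]_(s, r))
         (Y1 : 'M[algC]_(r + s, r)) (Y2 : 'M[algC]_(r + s, s))
         (T1 : 'M[algC]_(r + s)),
    let T := block_mx (J1 *m Sg *m K) (J1 *m Sg *m L)
                      (J3 *m Sg *m K) (J3 *m Sg *m L) in
    let W := invmx (G1 *m Sg *m Delta) in
    let B1 := row_mx (Sg *m K) (Sg *m L) *m
                (T1 *m col_mx (cadj K *m W) (cadj L *m W)
                 + (1%:M - T1 *m T) *m Y1) in
    let B2 := row_mx (Sg *m K) (Sg *m L) *m (1%:M - T1 *m T) *m Y2 in
    [/\ forall x : 'cV[algC]_(r + s), cadj T *m x = 0 -> row_mx K L *m x = 0,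
        T *m T1 *m T = T,
        B = U *m block_mx B1 B2 0 0 *m cadj U *m G
      & C = G *m U *m T *m cadj U].
Proof.
move=> Sg G G1 Delta.
have hUi : cadj U *m U = 1%:M := mulmx1C hU.
pose R := row_mx K L.
pose E : 'M[algC]_(r + s, r) := col_mx 1%:M 0.
pose H := cadj U *m G *m U.
have hGG : G *m G = 1%:M := GG _.
have cGG : cadj G = G := cadjG _.
have cSg : cadj Sg = Sg.
  apply/matrixP=> i j; rewrite /cadj /Sg !mxE eq_sym.
  case: eqP=> [->|_]; last by rewrite mulr0n conjC0.
  by rewrite !mulr1n geC0_conj // ltW.
have Sgu : Sg \in unitmx.
  rewrite unitmxE det_diag unitfE; apply/prodf_neq0=> i _.
  by rewrite gt_eqF ?hsigma.
have hR : R *m cadj R = 1%:M by rewrite cadj_row mul_row_col.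
have hE : cadj E *m E = 1%:M by rewrite cadj_col cadj1 cadj0 mul_row_col mul1mx mul0mx addr0.
have hA' : A = U *m (E *m Sg *m R) *m cadj U.
  by rewrite hA /E /R mul_col_mx mul1mx mul0mx mul_col_mx mul0mx mul_mx_row -row_mx0 -block_mxEv.
have hG1 : G1 = cadj E *m H *m E.
  rewrite /G1 /E cadj_col cadj1 cadj0 -/H -[H in RHS]submxK mul_row_block !mul1mx !mul0mx !addr0.
  by rewrite mul_row_col mulmx1 mulmx0 addr0.
have hD : Delta = R *m H *m cadj R by rewrite /Delta cadj_row.
have hHH : H *m H = 1%:M.
  by rewrite /H !mulmxA (c2 hU) mulmx1 (c2 hGG) mulmx1 hUi.
have cH : cadj H = H by rewrite /H !cadjM cadjK cGG mulmxA.
have key : mink_adj A *m A *m mink_adj A =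
   (G *m U *m cadj R) *m (Sg *m G1 *m Sg *m Delta *m Sg) *m (cadj E *m cadj U *m G).
  by rewrite /mink_adj hA' !cadjM cadjK cSg hG1 hD /H !mulmxA.
have Mu : Sg *m G1 *m Sg *m Delta *m Sg \in unitmx.
  rewrite -row_full_unit /row_full eqn_leq rank_leq_row /=.
  rewrite -[X in (X <= _)%N]hrank -hrk key.
  exact: leq_trans (mxrankM_maxl _ _) (mxrankM_maxr _ _).
have hu : G1 *m Sg *m Delta \in unitmx.
  by move: Mu; rewrite !unitmx_mul => /andP[/andP[/andP[/andP[a b] c] d] e]; rewrite a b d.
pose W := invmx (G1 *m Sg *m Delta).
have hWl : W *m (G1 *m Sg *m Delta) = 1%:M by rewrite mulVmx.
have hWr : (G1 *m Sg *m Delta) *m W = 1%:M by rewrite mulmxV.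
have hXc := transport hU (coords hHH cH hG1 hD hWl hWr).
rewrite -hA' in hXc.
have hAm1 := mink_uniq hAm hXc.
have hAm2 : Am = G *m U *m (cadj R *m W *m cadj E) *m cadj U *m G.
  by rewrite hAm1 /H !mulmxA (c2 hU) mulmx1 hU mul1mx.
have canc : forall X, cadj U *m G *m (G *m U *m X *m cadj U *m G) *m G *m U = X.
  move=> X; rewrite !mulmxA (c2 hGG) mulmx1 (c2 hUi) mulmx1 (c2 hGG) mulmx1 hUi mul1mx //.
split.
- move=> hL.
  have h0 := (hL Am).2 erefl.
  have [Y0 hY0] := rank_block_B h0.
  have [Z0 hZ0] := rank_block_C h0.
  move: h0; rewrite hY0 hZ0 => /rank_block_eq hAmZ.
  pose Z1 := Z0 *m U *m E.
  pose J := cadj U *m G *m Z1.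
  pose P := cadj U *m Y0 *m G *m U.
  pose B' := Sg *m R *m P.
  have hGUJ : G *m U *m J = Z1 by rewrite /J !mulmxA (c2 hU) mulmx1 hGG mul1mx.
  have hC : C = G *m U *m J *m Sg *m R *m cadj U by rewrite hZ0 hA' hGUJ /Z1 !mulmxA.
  have e : G *m U *m (J *m B') *m cadj U *m G = Am.
    by rewrite hAmZ hA' /B' /P !mulmxA !(c2 hU) !mulmx1 !(c2 hGG) !mulmx1 ?hGG ?mul1mx.
  have hJB : J *m B' = cadj R *m W *m cadj E by rewrite -[J *m B']canc e hAm2 canc.
  have eB' : B' = Sg *m R *m P := erefl.
  have eP : P = cadj U *m Y0 *m G *m U := erefl.
  clearbody B' P J.
  exists (usubmx J), (dsubmx J), (lsubmx P), (rsubmx P), (pinvmx (J *m Sg *m R)).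
  rewrite Tgen vsubmxK -/R.
  move=> T W0 B1 B2; rewrite {}/B1 {}/B2 {}/T {}/W0 -/W.
  split.
  + move=> x hx.
    have hJx : cadj J *m x = 0.
      have : invmx Sg *m R *m (cadj (J *m Sg *m R) *m x) = 0 by rewrite hx mulmx0.
      by rewrite !cadjM cSg !mulmxA (c2 hR) mulmx1 mulVmx ?mul1mx.
    have := congr1 (fun M => cadj M *m x) hJB.
    rewrite /= !cadjM !cadjK -mulmxA hJx mulmx0 => /esym h.
    have : cadj E *m (E *m (cadj W *m R) *m x) = 0 by rewrite h mulmx0.
    rewrite !mulmxA hE mul1mx => h2.
    have Wu : cadj W \in unitmx by rewrite cadj_unit unitmx_inv.
    have : invmx (cadj W) *m (cadj W *m R *m x) = 0 by rewrite h2 mulmx0.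
    by rewrite !mulmxA mulVmx // mul1mx.
  + exact: mulmxKpV (submx_refl _).
  + set T1 := pinvmx _.
    have hTP : J *m Sg *m R *m P = cadj R *m W *m cadj E by rewrite -hJB eB' !mulmxA.
    have hTY1 : J *m Sg *m R *m lsubmx P = cadj R *m W.
      by rewrite mulmx_lsub hTP -mulmx_lsub /E cadj_col cadj1 row_mxKl mulmx1.
    have hTY2 : J *m Sg *m R *m rsubmx P = 0.
      by rewrite mulmx_rsub hTP -mulmx_rsub /E cadj_col cadj0 row_mxKr mulmx0.
    have eB1 : row_mx (Sg *m K) (Sg *m L) *m (T1 *m col_mx (cadj K *m W) (cadj L *m W)
        + (1%:M - T1 *m (J *m Sg *m R)) *m lsubmx P) = lsubmx B'.
      rewrite -mul_mx_row -/R -mul_col_mx -cadj_row -/R mulmxBl mul1mx.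
      by rewrite -[T1 *m _ *m lsubmx P]mulmxA hTY1 addrC subrK eB' mulmx_lsub.
    have eB2 : row_mx (Sg *m K) (Sg *m L) *m (1%:M - T1 *m (J *m Sg *m R)) *m rsubmx P = rsubmx B'.
      rewrite -mul_mx_row -[_ *m (1%:M - _) *m rsubmx P]mulmxA mulmxBl mul1mx.
      by rewrite -[T1 *m _ *m rsubmx P]mulmxA hTY2 mulmx0 subr0 eB' mulmx_rsub.
    rewrite eB1 eB2 block_mxEv hsubmxK row_mx0 hA'.
    have eE : col_mx B' 0 = E *m B' by rewrite /E mul_col_mx mul1mx mul0mx.
    by rewrite eE eB' eP !mulmxA !(c2 hU) !mulmx1 !(c2 hGG) !mulmx1.
  + by rewrite -hZ0 hC !mulmxA.
- case=> J1 [J3 [Y1 [Y2 [T1]]]].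
  rewrite Tgen -/R.
  move: (col_mx J1 J3) => J.
  cbv zeta; rewrite -/W; case=> h1 h2 h3 h4.
  have [F hF] := ker_sub h1.
  have hRs : cadj R = J *m Sg *m R *m cadj F by rewrite [in LHS]hF cadjM cadjK.
  have h2f : J *m Sg *m R *m T1 *m J *m Sg *m R = J *m Sg *m R by rewrite !mulmxA in h2.
  have eJB1 : J *m (row_mx (Sg *m K) (Sg *m L) *m (T1 *m col_mx (cadj K *m W) (cadj L *m W)
        + (1%:M - T1 *m (J *m Sg *m R)) *m Y1)) = cadj R *m W.
    rewrite -mul_mx_row -/R -mul_col_mx -cadj_row -/R !mulmxA mulmxDr mulmxA mulmxBl mul1mx.
    rewrite mulmxBr !mulmxA h2f subrr addr0 [in LHS]hRs !mulmxA h2f -hRs //.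
  have eJB2 : J *m (row_mx (Sg *m K) (Sg *m L) *m (1%:M - T1 *m (J *m Sg *m R)) *m Y2) = 0.
    rewrite -mul_mx_row -/R !mulmxA mulmxBr mulmx1 !mulmxA.
    by rewrite h2f subrr mul0mx.
  move: h3 h4 eJB1 eJB2.
  set B1 := row_mx _ _ *m (_ + _).
  set B2 := row_mx _ _ *m _ *m Y2.
  move=> h3 h4 eJB1 eJB2.
  pose B' := row_mx B1 B2.
  have hJB : J *m B' = cadj R *m W *m cadj E.
    by rewrite /B' mul_mx_row eJB1 eJB2 /E cadj_col cadj1 cadj0 mul_mx_row mulmx1 mulmx0.
  clearbody B1 B2.
  pose Yb := U *m cadj R *m invmx Sg *m B' *m cadj U *m G.
  pose Zc := G *m U *m J *m cadj E *m cadj U.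
  have hB : B = A *m Yb.
    have eE : col_mx B' 0 = E *m B' by rewrite /E mul_col_mx mul1mx mul0mx.
    rewrite h3 hA' block_mxEv row_mx0 -/B' eE /Yb !mulmxA !(c2 hUi) !mulmx1 !(c2 hR) !mulmx1.
    by rewrite (c2 (mulmxV Sgu)) mulmx1.
  have hC : C = Zc *m A.
    by rewrite h4 hA' /Zc !mulmxA !(c2 hUi) !mulmx1 !(c2 hE) !mulmx1.
  have hZAY : Zc *m A *m Yb = Am.
    rewrite hAm2 hA' /Zc /Yb !mulmxA !(c2 hUi) !mulmx1 !(c2 hE) !mulmx1 !(c2 hR) !mulmx1.
    by rewrite (c2 (mulmxV Sgu)) mulmx1 (c2 hJB) !mulmxA.
  move=> X; rewrite hB hC -hZAY; exact: rank_block_eq.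
Qed.
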